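(* If $\Delta;\Gamma\vdash M:A$, $\Delta;\Gamma\vdash N:A$ and $\Delta\vdash M\equiv N$ in DCC, then $\vdash M^\circ\equiv N^\circ$ in CC.
   Context: DCC: expressions $x\mid U_i\mid\Pi x{:}A.B\mid L@M\mid\ell_i\{\overline M\}$; label contexts $\Delta::=\cdot\mid\Delta,\ell_i(\{\overline x{:}\overline A\},x{:}A\mapsto L:B)$; substitution with $\ell\{\overline M\}[N/x]=\ell\{\overline{M[N/x]}\}$; reduction $\Delta\vdash\ell\{\overline M\}@N\triangleright L[\overline M/\overline x,N/x]$ when $\ell(\{\overline x{:}\overline A\},x{:}A\mapsto L:B)\in\Delta$; equivalence $\Delta\vdash M\equiv N$: common reduct, or $\Delta\vdash L\triangleright^*\ell\{\overline N\}$, $\Delta\vdash M\triangleright^*M'$, $\ell(\{\overline x{:}\overline A\},x{:}A\mapsto N:B)\in\Delta$, $\Delta\vdash N[\overline N/\overline x]\equiv M'@x$ give $\Delta\vdash L\equiv M$, and symmetrically; typing $\Delta;\Gamma\vdash M:A$ by CC-style rules for variables, $U_i:U_{i+1}$, $\Pi$, application $M@N:B[N/x]$, conversion, plus: if $\Delta;\Gamma$ well formed, $\ell(\{\overline x{:}\overline A\},x{:}A\mapsto M:B)\in\Delta$, $|\overline M|=|\overline x|$, $\Delta;\Gamma\vdash M_k:A_k[M_1/x_1,\dots,M_{k-1}/x_{k-1}]$ for all $k$, then $\Delta;\Gamma\vdash\ell\{\overline M\}:\Pi x{:}A[\overline M/\overline x].B[\overline M/\overline x]$. CC: expressions $x\mid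 U_i\mid\Pi x{:}A.B\mid L\,M\mid\lambda x{:}A.M$; reduction $(\lambda x{:}A.N)\,M\triangleright N[M/x]$; $\vdash M\equiv N$: common reduct, or $L\triangleright^*\lambda x{:}A.L'$, $M\triangleright^*M'$, $\vdash L'\equiv M'\,x$ give $\vdash L\equiv M$, and symmetrically. Backward transformation (relative to $\Delta$, on well-typed terms): $x^\circ=x$, $U_i^\circ=U_i$, $(\Pi x{:}A.B)^\circ=\Pi x{:}A^\circ.B^\circ$, $(M@N)^\circ=M^\circ\,N^\circ$, $(\ell\{\overline M\})^\circ=\lambda x{:}A^\circ[\overline{M^\circ}/\overline x].\,L^\circ[\overline{M^\circ}/\overline x]$ where $\ell(\{\overline x{:}\overline A\},x{:}A\mapsto L:B)\in\Delta$. *)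

(* Defs.v *)
(* Syntax with de Bruijn indices (variable 0 = innermost binder). *)
From Stdlib Require Import List Arith Relations.
Import ListNotations.

Inductive dterm : Type :=
| dvar  : nat -> dterm
| dsort : nat -> dterm
| dpi   : dterm -> dterm -> dterm            (* Pi x:A.B, B under one binder *)
| dapp  : dterm -> dterm -> dterm
| dlab  : nat -> list dterm -> dterm.        (* l_i { M_1 ... M_n } *)

Fixpoint dren (xi : nat -> nat) (t : dterm) : dterm :=
  match t with
  | dvar n => dvar (xi n)
  | dsort i => dsort i
  | dpi A B => dpi (dren xi A) (dren (fun n => match n with 0 => 0 | S n => S (xi n) end) B)
  | dapp M N => dapp (dren xi M) (dren xi N)
  | dlab l Ms => dlab l (map (dren xi) Ms)
  end.

Definition dup (s : nat -> dterm) : nat -> dterm :=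
  fun n => match n with 0 => dvar 0 | S n => dren S (s n) end.

(* parallel substitution; label bodies live in Delta, so l{Ms}[s] = l{Ms[s]} *)
Fixpoint dsubst (s : nat -> dterm) (t : dterm) : dterm :=
  match t with
  | dvar n => s n
  | dsort i => dsort i
  | dpi A B => dpi (dsubst s A) (dsubst (dup s) B)
  | dapp M N => dapp (dsubst s M) (dsubst s N)
  | dlab l Ms => dlab l (map (dsubst s) Ms)
  end.

Definition dscons (N : dterm) (s : nat -> dterm) : nat -> dterm :=
  fun n => match n with 0 => N | S n => s n end.

Definition dsubst1 (B N : dterm) : dterm := dsubst (dscons N dvar) B.

(* the substitution [M_1/x_1, ..., M_n/x_n] for a body living in context
   x_1, ..., x_n (x_n is de Bruijn index 0) *)
Definition dinst (Ms : list dterm) : nat -> dterm :=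
  fun i => if i <? length Ms then nth (length Ms - 1 - i) Ms (dvar 0)
           else dvar (i - length Ms).

(* A label definition  l({x_1:A_1,...,x_n:A_n}, x:A |-> L : B).
   le_args = [A_1; ...; A_n], A_k lives in context x_1..x_(k-1);
   le_dom = A lives in x_1..x_n; le_body = L and le_cod = B live in x_1..x_n,x. *)
Record lentry := LEntry {
  le_lab  : nat;
  le_args : list dterm;
  le_dom  : dterm;
  le_body : dterm;
  le_cod  : dterm }.

(* Label contexts; the head of the list is the most recently added entry:
   Delta, l(...)  is  (l(...) :: Delta). *)
Definition lctx := list lentry.

Fixpoint lookup (l : nat) (D : lctx) : option (lentry * lctx) :=
  match D with
  | [] => None
  | e :: D' => if Nat.eqb (le_lab e) l then Some (e, D') else lookup l D'
  end.

Definition in_lctx (e : lentry) (D : lctx) : Prop :=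
  exists D', lookup (le_lab e) D = Some (e, D').

Inductive dstep (D : lctx) : dterm -> dterm -> Prop :=
| dstep_beta : forall e Ms N,
    in_lctx e D -> length Ms = length (le_args e) ->
    dstep D (dapp (dlab (le_lab e) Ms) N) (dsubst (dscons N (dinst Ms)) (le_body e))
| dstep_pi1 : forall A A' B, dstep D A A' -> dstep D (dpi A B) (dpi A' B)
| dstep_pi2 : forall A B B', dstep D B B' -> dstep D (dpi A B) (dpi A B')
| dstep_app1 : forall M M' N, dstep D M M' -> dstep D (dapp M N) (dapp M' N)
| dstep_app2 : forall M N N', dstep D N N' -> dstep D (dapp M N) (dapp M N')
| dstep_lab : forall l Ms1 M M' Ms2, dstep D M M' ->
    dstep D (dlab l (Ms1 ++ M :: Ms2)) (dlab l (Ms1 ++ M' :: Ms2)).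

Definition dred (D : lctx) : dterm -> dterm -> Prop := clos_refl_trans _ (dstep D).

Inductive deq (D : lctx) : dterm -> dterm -> Prop :=
| deq_red : forall M N P, dred D M P -> dred D N P -> deq D M N
| deq_eta1 : forall L M M' e Ns,
    dred D L (dlab (le_lab e) Ns) -> dred D M M' -> in_lctx e D ->
    length Ns = length (le_args e) ->
    deq D (dsubst (dup (dinst Ns)) (le_body e)) (dapp (dren S M') (dvar 0)) ->
    deq D L M
| deq_eta2 : forall L M M' e Ns,
    dred D L (dlab (le_lab e) Ns) -> dred D M M' -> in_lctx e D ->
    length Ns = length (le_args e) ->
    deq D (dapp (dren S M') (dvar 0)) (dsubst (dup (dinst Ns)) (le_body e)) ->
    deq D M L.

(* typing contexts: head = type of variable 0; each type lives in the tail *)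
Definition dctx := list dterm.

Inductive lwf : lctx -> Prop :=
| lwf_nil : lwf []
| lwf_cons : forall D e,
    lookup (le_lab e) D = None ->
    typ D (le_dom e :: rev (le_args e)) (le_body e) (le_cod e) ->
    lwf (e :: D)
with cwf : lctx -> dctx -> Prop :=
| cwf_nil : forall D, lwf D -> cwf D []
| cwf_cons : forall D G A i, typ D G A (dsort i) -> cwf D (A :: G)
with typ : lctx -> dctx -> dterm -> dterm -> Prop :=
| typ_var : forall D G n A,
    cwf D G -> nth_error G n = Some A -> typ D G (dvar n) (dren (fun k => S n + k) A)
| typ_sort : forall D G i, cwf D G -> typ D G (dsort i) (dsort (S i))
| typ_pi : forall D G A B i j,
    typ D G A (dsort i) -> typ D (A :: G) B (dsort j) ->
    typ D G (dpi A B) (dsort (Nat.max i j))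
| typ_app : forall D G M N A B,
    typ D G M (dpi A B) -> typ D G N A -> typ D G (dapp M N) (dsubst1 B N)
| typ_conv : forall D G M A B i,
    typ D G M A -> typ D G B (dsort i) -> deq D A B -> typ D G M B
| typ_lab : forall D G e Ms,
    cwf D G -> in_lctx e D -> length Ms = length (le_args e) ->
    (forall k, k < length Ms ->
       typ D G (nth k Ms (dvar 0))
           (dsubst (dinst (firstn k Ms)) (nth k (le_args e) (dvar 0)))) ->
    typ D G (dlab (le_lab e) Ms)
        (dpi (dsubst (dinst Ms) (le_dom e)) (dsubst (dup (dinst Ms)) (le_cod e))).

Inductive cterm : Type :=
| cvar  : nat -> cterm
| csort : nat -> cterm
| cpi   : cterm -> cterm -> cterm
| capp  : cterm -> cterm -> cterm
| clam  : cterm -> cterm -> cterm.           (* lambda x:A. M, M under one binder *)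

Fixpoint cren (xi : nat -> nat) (t : cterm) : cterm :=
  match t with
  | cvar n => cvar (xi n)
  | csort i => csort i
  | cpi A B => cpi (cren xi A) (cren (fun n => match n with 0 => 0 | S n => S (xi n) end) B)
  | capp M N => capp (cren xi M) (cren xi N)
  | clam A M => clam (cren xi A) (cren (fun n => match n with 0 => 0 | S n => S (xi n) end) M)
  end.

Definition cup (s : nat -> cterm) : nat -> cterm :=
  fun n => match n with 0 => cvar 0 | S n => cren S (s n) end.

Fixpoint csubst (s : nat -> cterm) (t : cterm) : cterm :=
  match t with
  | cvar n => s n
  | csort i => csort i
  | cpi A B => cpi (csubst s A) (csubst (cup s) B)
  | capp M N => capp (csubst s M) (csubst s N)
  | clam A M => clam (csubst s A) (csubst (cup s) M)
  end.

Definition cscons (N : cterm) (s : nat -> cterm) : nat -> cterm :=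
  fun n => match n with 0 => N | S n => s n end.

Definition cinst (Ms : list cterm) : nat -> cterm :=
  fun i => if i <? length Ms then nth (length Ms - 1 - i) Ms (cvar 0)
           else cvar (i - length Ms).

Inductive cstep : cterm -> cterm -> Prop :=
| cstep_beta : forall A N M, cstep (capp (clam A N) M) (csubst (cscons M cvar) N)
| cstep_pi1 : forall A A' B, cstep A A' -> cstep (cpi A B) (cpi A' B)
| cstep_pi2 : forall A B B', cstep B B' -> cstep (cpi A B) (cpi A B')
| cstep_app1 : forall M M' N, cstep M M' -> cstep (capp M N) (capp M' N)
| cstep_app2 : forall M N N', cstep N N' -> cstep (capp M N) (capp M N')
| cstep_lam1 : forall A A' M, cstep A A' -> cstep (clam A M) (clam A' M)
| cstep_lam2 : forall A M M', cstep M M' -> cstep (clam A M) (clam A M').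

Definition cred : cterm -> cterm -> Prop := clos_refl_trans _ cstep.

Inductive ceq : cterm -> cterm -> Prop :=
| ceq_red : forall M N P, cred M P -> cred N P -> ceq M N
| ceq_eta1 : forall L L' A M M',
    cred L (clam A L') -> cred M M' -> ceq L' (capp (cren S M') (cvar 0)) -> ceq L M
| ceq_eta2 : forall L L' A M M',
    cred L (clam A L') -> cred M M' -> ceq (capp (cren S M') (cvar 0)) L' -> ceq M L.

(* (l{Ms})° = lambda x : A°[Ms°/xs]. L°[Ms°/xs]; the label body is transformed
   relative to the label context preceding the label (which is all it can mention
   in a well-formed Delta).  [fuel] only serves to make the definition structural. *)
Fixpoint back_fuel (fuel : nat) (D : lctx) {struct fuel} : dterm -> cterm :=
  fix go (M : dterm) : cterm :=
    match M with
    | dvar n => cvar n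
    | dsort i => csort i
    | dpi A B => cpi (go A) (go B)
    | dapp M N => capp (go M) (go N)
    | dlab l Ms =>
        match fuel with
        | 0 => csort 0
        | S f =>
          match lookup l D with
          | None => csort 0
          | Some (e, D') =>
              let s := cinst (map go Ms) in
              clam (csubst s (back_fuel f D' (le_dom e)))
                   (csubst (cup s) (back_fuel f D' (le_body e)))
          end
        end
    end.

Definition back (D : lctx) (M : dterm) : cterm := back_fuel (length D) D M.

(* Main.v *)
Require Import Defs.
From Stdlib Require Import List Arith Lia Relations.
Import ListNotations.

Definition upr (xi : nat -> nat) : nat -> nat :=
  fun n => match n with 0 => 0 | S n => S (xi n) end.

Lemma cren_ext : forall t xi zeta, (forall i, xi i = zeta i) -> cren xi t = cren zeta t.
Proof.
  induction t; intros xi zeta H; simpl; f_equal; auto;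
  try (apply IHt2 || apply IHt2); intros [|i]; simpl; auto.
Qed.

Lemma csubst_ext : forall t s r, (forall i, s i = r i) -> csubst s t = csubst r t.
Proof.
  induction t; intros s r H; simpl; f_equal; auto;
  try apply IHt2; intros [|i]; unfold cup; simpl; f_equal; auto.
Qed.

Lemma cren_cren : forall t xi zeta, cren xi (cren zeta t) = cren (fun i => xi (zeta i)) t.
Proof.
  induction t; intros xi zeta; simpl; f_equal; auto;
  rewrite IHt2; apply cren_ext; intros [|i]; reflexivity.
Qed.

Lemma cren_csubst : forall t xi s, cren xi (csubst s t) = csubst (fun i => cren xi (s i)) t.
Proof.
  induction t; intros xi s; simpl; f_equal; auto;
  rewrite IHt2; apply csubst_ext; intros [|i]; unfold cup; simpl; auto;
  rewrite !cren_cren; apply cren_ext; reflexivity.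
Qed.

Lemma csubst_cren : forall t xi s, csubst s (cren xi t) = csubst (fun i => s (xi i)) t.
Proof.
  induction t; intros xi s; simpl; f_equal; auto;
  rewrite IHt2; apply csubst_ext; intros [|i]; reflexivity.
Qed.

Lemma csubst_csubst : forall t s r, csubst r (csubst s t) = csubst (fun i => csubst r (s i)) t.
Proof.
  induction t; intros s r; simpl; f_equal; auto;
  rewrite IHt2; apply csubst_ext; intros [|i]; unfold cup; simpl; auto;
  rewrite csubst_cren, cren_csubst; apply csubst_ext; reflexivity.
Qed.

Lemma cren_subst : forall t xi, cren xi t = csubst (fun i => cvar (xi i)) t.
Proof.
  induction t; intros xi; simpl; f_equal; auto;
  rewrite IHt2; apply csubst_ext; intros [|i]; reflexivity.
Qed.

Lemma csubst_id : forall t, csubst cvar t = t.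
Proof.
  induction t; simpl; f_equal; auto;
  rewrite <- IHt2 at 2; apply csubst_ext; intros [|i]; reflexivity.
Qed.

Lemma up_comm : forall x t, csubst (cup t) (cren S x) = cren S (csubst t x).
Proof. intros. rewrite csubst_cren, cren_csubst. apply csubst_ext. reflexivity. Qed.

Fixpoint cclosed (n : nat) (t : cterm) : Prop :=
  match t with
  | cvar i => i < n
  | csort _ => True
  | cpi A B => cclosed n A /\ cclosed (S n) B
  | capp M N => cclosed n M /\ cclosed n N
  | clam A M => cclosed n A /\ cclosed (S n) M
  end.

Lemma csubst_ext_cl : forall t k s r, cclosed k t -> (forall i, i < k -> s i = r i) ->
  csubst s t = csubst r t.
Proof.
  induction t; intros k s r Hc H; simpl in *; try f_equal; intuition eauto;
  (eapply IHt2; [eassumption|]); intros [|i] Hi; unfold cup; simpl; auto;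
  f_equal; apply H; lia.
Qed.

Lemma cclosed_ren : forall t k m xi, cclosed k t -> (forall i, i < k -> xi i < m) ->
  cclosed m (cren xi t).
Proof.
  induction t; intros k m xi Hc H; simpl in *; auto.
  - destruct Hc; split; [eauto|]. eapply IHt2; [eassumption|].
    intros [|i] Hi; simpl; try lia. specialize (H i); lia.
  - destruct Hc; split; eauto.
  - destruct Hc; split; [eauto|]. eapply IHt2; [eassumption|].
    intros [|i] Hi; simpl; try lia. specialize (H i); lia.
Qed.

Lemma cclosed_subst : forall t k m s, cclosed k t -> (forall i, i < k -> cclosed m (s i)) ->
  cclosed m (csubst s t).
Proof.
  induction t; intros k m s Hc H; simpl in *; auto.
  - destruct Hc; split; [eauto|]. eapply IHt2; [eassumption|].
    intros [|i] Hi; unfold cup; simpl; try lia.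
    eapply cclosed_ren; [apply H; lia| intros; lia].
  - destruct Hc; split; eauto.
  - destruct Hc; split; [eauto|]. eapply IHt2; [eassumption|].
    intros [|i] Hi; unfold cup; simpl; try lia.
    eapply cclosed_ren; [apply H; lia| intros; lia].
Qed.

Lemma cinst_map : forall f Ls i, i < length Ls -> f (cinst Ls i) = cinst (map f Ls) i.
Proof.
  intros f Ls i Hi. unfold cinst. rewrite length_map.
  destruct (Nat.ltb_spec i (length Ls)); [|lia].
  rewrite (nth_indep (map f Ls) (cvar 0) (f (cvar 0))) by (rewrite length_map; lia).
  rewrite map_nth. reflexivity.
Qed.

Lemma csubst_cinst : forall X n Ls r, cclosed n X -> n <= length Ls ->
  csubst r (csubst (cinst Ls) X) = csubst (cinst (map (csubst r) Ls)) X.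
Proof.
  intros. rewrite csubst_csubst. eapply csubst_ext_cl; [eassumption|].
  intros i Hi. apply cinst_map. lia.
Qed.

Lemma csubst_cinst_up : forall Y n Ls r, cclosed (S n) Y -> n <= length Ls ->
  csubst (cup r) (csubst (cup (cinst Ls)) Y) = csubst (cup (cinst (map (csubst r) Ls))) Y.
Proof.
  intros. rewrite csubst_csubst. eapply csubst_ext_cl; [eassumption|].
  intros [|i] Hi; [reflexivity|]. unfold cup at 2 3.
  rewrite up_comm. f_equal. apply cinst_map. lia.
Qed.

Lemma closed_cinst : forall Ls m, (forall k, k < length Ls -> cclosed m (nth k Ls (cvar 0))) ->
  forall i, i < length Ls -> cclosed m (cinst Ls i).
Proof.
  intros Ls m H i Hi. unfold cinst. destruct (Nat.ltb_spec i (length Ls)); [|lia].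
  apply H. lia.
Qed.

Lemma cstep_cren : forall x y, cstep x y -> forall xi, cstep (cren xi x) (cren xi y).
Proof.
  induction 1; intros xi; simpl; try (constructor; auto; fail).
  replace (cren xi (csubst (cscons M cvar) N))
    with (csubst (cscons (cren xi M) cvar) (cren (upr xi) N)).
  - apply (cstep_beta (cren xi A) (cren (upr xi) N) (cren xi M)).
  - rewrite csubst_cren, cren_csubst. apply csubst_ext. intros [|i]; reflexivity.
Qed.

Lemma cred_map : forall (f : cterm -> cterm), (forall x y, cstep x y -> cstep (f x) (f y)) ->
  forall x y, cred x y -> cred (f x) (f y).
Proof.
  intros f Hf x y H. induction H.
  - apply rt_step; auto.
  - apply rt_refl.
  - eapply rt_trans; eauto.
Qed.

Lemma cred_cren : forall xi x y, cred x y -> cred (cren xi x) (cren xi y).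
Proof. intros xi. apply cred_map. intros; apply cstep_cren; auto. Qed.

Lemma cred_pi : forall A A' B B', cred A A' -> cred B B' -> cred (cpi A B) (cpi A' B').
Proof.
  intros. eapply rt_trans.
  - apply (cred_map (fun x => cpi x B)); [intros; constructor; auto|eassumption].
  - apply (cred_map (fun x => cpi A' x)); [intros; constructor; auto|eassumption].
Qed.
Lemma cred_app : forall A A' B B', cred A A' -> cred B B' -> cred (capp A B) (capp A' B').
Proof.
  intros. eapply rt_trans.
  - apply (cred_map (fun x => capp x B)); [intros; constructor; auto|eassumption].
  - apply (cred_map (fun x => capp A' x)); [intros; constructor; auto|eassumption].
Qed.
Lemma cred_lam : forall A A' B B', cred A A' -> cred B B' -> cred (clam A B) (clam A' B').
Proof.
  intros. eapply rt_trans.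
  - apply (cred_map (fun x => clam x B)); [intros; constructor; auto|eassumption].
  - apply (cred_map (fun x => clam A' x)); [intros; constructor; auto|eassumption].
Qed.

Lemma csubst_cred : forall t s r, (forall i, cred (s i) (r i)) -> cred (csubst s t) (csubst r t).
Proof.
  induction t; intros s r H; simpl.
  - apply H.
  - apply rt_refl.
  - apply cred_pi; auto. apply IHt2. intros [|i]; simpl; [apply rt_refl|]. apply cred_cren; auto.
  - apply cred_app; auto.
  - apply cred_lam; auto. apply IHt2. intros [|i]; simpl; [apply rt_refl|]. apply cred_cren; auto.
Qed.

Lemma Forall2_nth {A B} (R : A -> B -> Prop) l l' d d' :
  Forall2 R l l' -> R d d' -> forall k, R (nth k l d) (nth k l' d').
Proof.
  induction 1; intros Hd [|k]; simpl; auto.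
Qed.

Lemma cinst_cred : forall Ls Ls', Forall2 cred Ls Ls' -> forall i, cred (cinst Ls i) (cinst Ls' i).
Proof.
  intros Ls Ls' H i. unfold cinst. rewrite (Forall2_length H).
  destruct (i <? length Ls'). - apply Forall2_nth; auto. apply rt_refl. - apply rt_refl.
Qed.
Definition dterm_ind' (P : dterm -> Prop)
  (Hv : forall n, P (dvar n)) (Hs : forall i, P (dsort i))
  (Hp : forall A B, P A -> P B -> P (dpi A B))
  (Ha : forall M N, P M -> P N -> P (dapp M N))
  (Hl : forall l Ms, Forall P Ms -> P (dlab l Ms)) : forall t, P t :=
  fix F t := match t with
  | dvar n => Hv n | dsort i => Hs i
  | dpi A B => Hp A B (F A) (F B)
  | dapp M N => Ha M N (F M) (F N)
  | dlab l Ms => Hl l Ms ((fix G Ms := match Ms return Forall P Ms with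
       | [] => Forall_nil _ | M :: Ms => Forall_cons _ (F M) (G Ms) end) Ms)
  end.

Lemma bf_var f D n : back_fuel f D (dvar n) = cvar n. Proof. destruct f; reflexivity. Qed.
Lemma bf_sort f D n : back_fuel f D (dsort n) = csort n. Proof. destruct f; reflexivity. Qed.
Lemma bf_pi f D A B : back_fuel f D (dpi A B) = cpi (back_fuel f D A) (back_fuel f D B).
Proof. destruct f; reflexivity. Qed.
Lemma bf_app f D A B : back_fuel f D (dapp A B) = capp (back_fuel f D A) (back_fuel f D B).
Proof. destruct f; reflexivity. Qed.
Lemma bf_lab0 D l Ms : back_fuel 0 D (dlab l Ms) = csort 0. Proof. reflexivity. Qed.
Lemma bf_labS f D l Ms : back_fuel (S f) D (dlab l Ms) =
  match lookup l D with None => csort 0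
  | Some (e, D') => clam (csubst (cinst (map (back_fuel (S f) D) Ms)) (back_fuel f D' (le_dom e)))
                        (csubst (cup (cinst (map (back_fuel (S f) D) Ms))) (back_fuel f D' (le_body e)))
  end.
Proof. reflexivity. Qed.

Lemma lookup_length : forall D l e D', lookup l D = Some (e, D') -> length D' < length D.
Proof.
  induction D; simpl; intros l e D' H; [discriminate|].
  destruct (Nat.eqb (le_lab a) l); [inversion H; subst; simpl; lia|].
  apply IHD in H. lia.
Qed.

Lemma map_ext_F {A B} (f g : A -> B) l : Forall (fun x => f x = g x) l -> map f l = map g l.
Proof. induction 1; simpl; f_equal; auto. Qed.

Lemma back_fuel_irr : forall f g D t, length D <= f -> length D <= g ->
  back_fuel f D t = back_fuel g D t.
Proof.
  induction f as [|f IHf]; intros g D t Hf Hg; induction t using dterm_ind';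
    rewrite ?bf_var, ?bf_sort, ?bf_pi, ?bf_app; try congruence.
  - destruct D; simpl in Hf; [|lia]. destruct g; reflexivity.
  - destruct g as [|g].
    + destruct D; simpl in Hg; [|lia]. reflexivity.
    + rewrite !bf_labS. destruct (lookup l D) as [[e D']|] eqn:E; [|reflexivity].
      apply lookup_length in E.
      rewrite (map_ext_F _ _ _ H). rewrite (IHf g D' (le_dom e)), (IHf g D' (le_body e)) by lia.
      reflexivity.
Qed.

Lemma back_var D n : back D (dvar n) = cvar n. Proof. apply bf_var. Qed.
Lemma back_sort D n : back D (dsort n) = csort n. Proof. apply bf_sort. Qed.
Lemma back_pi D A B : back D (dpi A B) = cpi (back D A) (back D B). Proof. apply bf_pi. Qed.
Lemma back_app D A B : back D (dapp A B) = capp (back D A) (back D B). Proof. apply bf_app. Qed.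
Lemma back_lab D l Ms : back D (dlab l Ms) =
  match lookup l D with None => csort 0
  | Some (e, D') => clam (csubst (cinst (map (back D) Ms)) (back D' (le_dom e)))
                        (csubst (cup (cinst (map (back D) Ms))) (back D' (le_body e)))
  end.
Proof.
  destruct (lookup l D) as [[e D']|] eqn:E.
  - pose proof (lookup_length _ _ _ _ E). unfold back at 1.
    destruct (length D) as [|f] eqn:L; [lia|]. rewrite bf_labS, E. unfold back.
    rewrite L. rewrite !(back_fuel_irr f (length D')) by lia. reflexivity.
  - unfold back. destruct (length D); [reflexivity|]. rewrite bf_labS, E. reflexivity.
Qed.

Lemma back_dinst D Ms j : back D (dinst Ms j) = cinst (map (back D) Ms) j.
Proof.
  unfold dinst, cinst. rewrite length_map. destruct (j <? length Ms).
  - rewrite <- (back_var D 0). rewrite map_nth. reflexivity.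
  - apply back_var.
Qed.

Fixpoint ar_ok (D : lctx) (t : dterm) : Prop :=
  match t with
  | dvar _ => True | dsort _ => True
  | dpi A B => ar_ok D A /\ ar_ok D B
  | dapp M N => ar_ok D M /\ ar_ok D N
  | dlab l Ms => (exists e D', lookup l D = Some (e, D') /\ length Ms = length (le_args e))
                 /\ fold_right and True (map (ar_ok D) Ms)
  end.

Lemma allF {A} (f : A -> Prop) l : fold_right and True (map f l) <-> Forall f l.
Proof.
  induction l; simpl; split; intros H; auto.
  - destruct H; constructor; tauto.
  - inversion H; subst; tauto.
Qed.

Lemma ar_ok_ren : forall D t xi, ar_ok D t -> ar_ok D (dren xi t).
Proof.
  intros D t; induction t using dterm_ind'; intros xi Ht; simpl in *; intuition eauto.
  - destruct H0 as (e & D' & E & L). exists e, D'. rewrite length_map. auto.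
  - apply allF. apply allF in H1. rewrite Forall_map.
    rewrite Forall_forall in *. intros; apply H; auto.
Qed.

Lemma ar_ok_subst : forall D t s, ar_ok D t -> (forall i, ar_ok D (s i)) -> ar_ok D (dsubst s t).
Proof.
  intros D t; induction t using dterm_ind'; intros s Ht Hs; simpl in *; intuition eauto.
  - apply IHt2; auto. intros [|i]; simpl; auto. apply ar_ok_ren; auto.
  - destruct H0 as (e & D' & E & L). exists e, D'. rewrite length_map. auto.
  - apply allF. apply allF in H1. rewrite Forall_map.
    rewrite Forall_forall in *. intros; apply H; auto.
Qed.

Definition good (D : lctx) := forall l e D', lookup l D = Some (e, D') ->
  cclosed (length (le_args e)) (back D' (le_dom e)) /\
  cclosed (S (length (le_args e))) (back D' (le_body e)) /\
  ar_ok D (le_body e) /\ back D' (le_body e) = back D (le_body e).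

Lemma back_ren : forall D, good D -> forall t, ar_ok D t -> forall xi,
  back D (dren xi t) = cren xi (back D t).
Proof.
  intros D HD t; induction t using dterm_ind'; intros Ht xi; simpl in Ht;
    simpl dren; rewrite ?back_var, ?back_sort, ?back_pi, ?back_app; simpl; try reflexivity.
  - rewrite IHt1, IHt2 by tauto. reflexivity.
  - rewrite IHt1, IHt2 by tauto. reflexivity.
  - destruct Ht as [(e & D' & E & L) Hall]. apply allF in Hall.
    rewrite !back_lab, E. destruct (HD _ _ _ E) as (C1 & C2 & _).
    assert (Hm : map (back D) (map (dren xi) Ms) = map (csubst (fun i => cvar (xi i))) (map (back D) Ms)).
    { rewrite !map_map. apply map_ext_F. rewrite Forall_forall in *.
      intros x Hx. rewrite (H x Hx) by auto. apply cren_subst. }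
    rewrite Hm. simpl. rewrite !cren_subst.
    rewrite <- (csubst_cinst _ _ _ _ C1) by (rewrite length_map; lia).
    rewrite <- (csubst_cinst_up _ _ _ _ C2) by (rewrite length_map; lia).
    f_equal. apply csubst_ext. intros [|i]; reflexivity.
Qed.

Lemma back_subst : forall D, good D -> forall t, ar_ok D t -> forall s, (forall i, ar_ok D (s i)) ->
  back D (dsubst s t) = csubst (fun i => back D (s i)) (back D t).
Proof.
  intros D HD t; induction t using dterm_ind'; intros Ht s Hs; simpl in Ht;
    simpl dsubst; rewrite ?back_var, ?back_sort, ?back_pi, ?back_app; simpl; try reflexivity.
  - rewrite IHt1, IHt2 by (try tauto; intros [|i]; simpl; auto; apply ar_ok_ren; auto).
    f_equal. apply csubst_ext. intros [|i]; unfold cup, dup; simpl.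
    + apply back_var.
    + apply back_ren; auto.
  - rewrite IHt1, IHt2 by tauto. reflexivity.
  - destruct Ht as [(e & D' & E & L) Hall]. apply allF in Hall.
    rewrite !back_lab, E. destruct (HD _ _ _ E) as (C1 & C2 & _).
    assert (Hm : map (back D) (map (dsubst s) Ms) = map (csubst (fun i => back D (s i))) (map (back D) Ms)).
    { rewrite !map_map. apply map_ext_F. rewrite Forall_forall in *.
      intros x Hx. rewrite (H x Hx) by auto. reflexivity. }
    rewrite Hm. simpl.
    rewrite <- (csubst_cinst _ _ _ _ C1) by (rewrite length_map; lia).
    rewrite <- (csubst_cinst_up _ _ _ _ C2) by (rewrite length_map; lia).
    reflexivity.
Qed.
Lemma Forall_nth_d {A} (P : A -> Prop) l d : Forall P l -> P d -> forall k, P (nth k l d).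
Proof. induction 1; intros Hd [|k]; simpl; auto. Qed.

Lemma ar_ok_dinst D Ms : Forall (ar_ok D) Ms -> forall j, ar_ok D (dinst Ms j).
Proof.
  intros H j. unfold dinst. destruct (j <? length Ms); [|simpl; auto].
  apply Forall_nth_d; simpl; auto.
Qed.

Lemma Forall2_refl {A} (R : A -> A -> Prop) l : (forall x, R x x) -> Forall2 R l l.
Proof. induction l; constructor; auto. Qed.

Lemma sim : forall D, good D -> forall t t', dstep D t t' -> ar_ok D t ->
  cred (back D t) (back D t') /\ ar_ok D t'.
Proof.
  intros D HD t t' H. induction H; intros Ht; simpl in Ht;
    rewrite ?back_pi, ?back_app.
  - destruct Ht as [[_ Hall] HN]. apply allF in Hall.
    destruct H as [D' E].
    destruct (HD _ _ _ E) as (_ & _ & Hb & Heq).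
    assert (Hs : forall i, ar_ok D (dscons N (dinst Ms) i)).
    { intros [|i]; simpl; auto. apply ar_ok_dinst; auto. }
    split; [|apply ar_ok_subst; auto].
    rewrite back_lab, E, Heq.
    eapply rt_trans; [apply rt_step; apply cstep_beta|].
    rewrite back_subst by auto. rewrite csubst_csubst.
    replace (csubst (fun i => csubst (cscons (back D N) cvar) (cup (cinst (map (back D) Ms)) i))
                    (back D (le_body e)))
      with (csubst (fun i => back D (dscons N (dinst Ms) i)) (back D (le_body e))); [apply rt_refl|].
    apply csubst_ext. intros [|i]; simpl; [reflexivity|].
    rewrite csubst_cren. rewrite back_dinst. symmetry. apply csubst_id.
  - destruct Ht as [HA HB]. destruct (IHdstep HA). split; [apply cred_pi; auto; apply rt_refl|simpl; auto].
  - destruct Ht as [HA HB]. destruct (IHdstep HB). split; [apply cred_pi; auto; apply rt_refl|simpl; auto].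
  - destruct Ht as [HA HB]. destruct (IHdstep HA). split; [apply cred_app; auto; apply rt_refl|simpl; auto].
  - destruct Ht as [HA HB]. destruct (IHdstep HB). split; [apply cred_app; auto; apply rt_refl|simpl; auto].
  - destruct Ht as [(e & D' & E & L) Hall]. apply allF in Hall.
    apply Forall_app in Hall. destruct Hall as [H1 H2]. inversion H2; subst.
    destruct (IHdstep H4) as [Hr Ho].
    split.
    + rewrite !back_lab, E. 
      assert (HF : Forall2 cred (map (back D) (Ms1 ++ M :: Ms2)) (map (back D) (Ms1 ++ M' :: Ms2))).
      { rewrite !map_app. apply Forall2_app. apply Forall2_refl. intros; apply rt_refl.
        simpl. constructor; auto. apply Forall2_refl. intros; apply rt_refl. }
      apply cred_lam; apply csubst_cred; [apply cinst_cred; auto|].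
      intros [|i]; simpl; [apply rt_refl|]. apply cred_cren. apply cinst_cred; auto.
    + simpl. split.
      * exists e, D'. split; auto. rewrite length_app in *. simpl in *. lia.
      * apply allF. apply Forall_app. split; auto.
Qed.

Lemma simr : forall D, good D -> forall t t', dred D t t' -> ar_ok D t ->
  cred (back D t) (back D t') /\ ar_ok D t'.
Proof.
  intros D HD t t' H. induction H; intros Ht.
  - apply sim; auto.
  - split; auto. apply rt_refl.
  - destruct (IHclos_refl_trans1 Ht). destruct (IHclos_refl_trans2 H2).
    split; auto. eapply rt_trans; eauto.
Qed.

Lemma eta_body : forall D, good D -> forall e D' Ns, lookup (le_lab e) D = Some (e, D') ->
  ar_ok D (dlab (le_lab e) Ns) ->
  exists A, back D (dlab (le_lab e) Ns) = clam A (back D (dsubst (dup (dinst Ns)) (le_body e)))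
    /\ ar_ok D (dsubst (dup (dinst Ns)) (le_body e)).
Proof.
  intros D HD e D' Ns E Ht. simpl in Ht. destruct Ht as [_ Hall]. apply allF in Hall.
  destruct (HD _ _ _ E) as (_ & _ & Hb & Heq).
  assert (Hs : forall i, ar_ok D (dup (dinst Ns) i)).
  { intros [|i]; simpl; auto. apply ar_ok_ren. apply ar_ok_dinst; auto. }
  rewrite back_lab, E, Heq. eexists. split; [|apply ar_ok_subst; auto].
  f_equal. rewrite back_subst by auto. apply csubst_ext.
  intros [|i]; simpl; [symmetry; apply back_var|].
  rewrite back_ren by (first [assumption | apply ar_ok_dinst; auto]). rewrite back_dinst. reflexivity.
Qed.

Lemma main : forall D X Y, deq D X Y -> good D -> ar_ok D X -> ar_ok D Y ->
  ceq (back D X) (back D Y).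
Proof.
  intros D X Y H. induction H; intros HD HX HY.
  - destruct (simr D HD _ _ H HX). destruct (simr D HD _ _ H0 HY).
    eapply ceq_red; eauto.
  - destruct (simr D HD _ _ H HX) as [R1 O1]. destruct (simr D HD _ _ H0 HY) as [R2 O2].
    destruct H1 as [D' E].
    destruct (eta_body D HD e D' Ns E O1) as (A & Eq & Ok).
    rewrite Eq in R1.
    eapply ceq_eta1; [exact R1|exact R2|].
    specialize (IHdeq HD Ok). rewrite back_app, back_var, back_ren in IHdeq by auto.
    apply IHdeq. simpl. split; auto. apply ar_ok_ren; auto.
  - destruct (simr D HD _ _ H HY) as [R1 O1]. destruct (simr D HD _ _ H0 HX) as [R2 O2].
    destruct H1 as [D' E].
    destruct (eta_body D HD e D' Ns E O1) as (A & Eq & Ok).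
    rewrite Eq in R1.
    eapply ceq_eta2; [exact R1|exact R2|].
    specialize (IHdeq HD). rewrite back_app, back_var, back_ren in IHdeq by auto.
    apply IHdeq; auto. simpl. split; auto. apply ar_ok_ren; auto.
Qed.
Lemma typ_cwf : forall D G t T, typ D G t T -> cwf D G.
Proof. intros D G t T H. induction H; auto. Qed.

Lemma cwf_lwf : forall G D, cwf D G -> lwf D.
Proof.
  induction G; intros D H; inversion H; subst; auto.
  match goal with Ht : typ _ _ _ _ |- _ => apply typ_cwf in Ht end. auto.
Qed.

Lemma nth_Forall {A} (P : A -> Prop) l d : (forall k, k < length l -> P (nth k l d)) -> Forall P l.
Proof.
  induction l; intros H; constructor.
  - apply (H 0). simpl; lia.
  - apply IHl. intros k Hk. apply (H (S k)). simpl; lia.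
Qed.

Lemma typ_ar : forall D G t T, typ D G t T -> ar_ok D t.
Proof.
  intros D G t T H. induction H; simpl; auto; try tauto.
  split.
  - destruct H0 as [D' E]. exists e, D'. auto.
  - apply allF. apply (nth_Forall _ _ (dvar 0)). auto.
Qed.

Lemma typ_closed : forall D G t T, typ D G t T -> good D -> cclosed (length G) (back D t).
Proof.
  intros D G t T H. induction H as [| | | | |D G e Ms Hcw Hin Hlen Hty IHty]; intros HD; rewrite ?back_var, ?back_sort, ?back_pi, ?back_app; simpl; auto.
  - apply nth_error_Some. congruence.
  - destruct Hin as [D' E]. rewrite back_lab, E. destruct (HD _ _ _ E) as (C1 & C2 & _).
    assert (Hc : forall i, i < length (le_args e) -> cclosed (length G) (cinst (map (back D) Ms) i)).
    { intros i Hi. apply closed_cinst; [|rewrite length_map; lia].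
      intros k Hk. rewrite length_map in Hk. rewrite <- (back_var D 0), map_nth. apply IHty; auto. }
    simpl. split.
    + eapply cclosed_subst; [exact C1|]. auto.
    + eapply cclosed_subst; [exact C2|]. intros [|i] Hi; unfold cup; simpl; [lia|].
      eapply cclosed_ren; [apply Hc; lia|]. intros; lia.
Qed.

Lemma lift : forall e0 D0, lookup (le_lab e0) D0 = None -> forall t, ar_ok D0 t ->
  ar_ok (e0 :: D0) t /\ back (e0 :: D0) t = back D0 t.
Proof.
  intros e0 D0 Hn.
  assert (Hl : forall l x, lookup l D0 = Some x -> lookup l (e0 :: D0) = Some x).
  { intros l x E. simpl. destruct (Nat.eqb_spec (le_lab e0) l); auto. subst. congruence. }
  intros t; induction t using dterm_ind'; intros Ht; simpl in Ht;
    rewrite ?back_var, ?back_sort, ?back_pi, ?back_app; simpl; auto.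
  - destruct (IHt1 (proj1 Ht)), (IHt2 (proj2 Ht)). split; [tauto|congruence].
  - destruct (IHt1 (proj1 Ht)), (IHt2 (proj2 Ht)). split; [tauto|congruence].
  - destruct Ht as [(e & D' & E & L) Hall]. apply allF in Hall.
    assert (Hf : Forall (fun t => ar_ok (e0 :: D0) t /\ back (e0 :: D0) t = back D0 t) Ms).
    { rewrite Forall_forall in *. intros; auto. }
    split.
    + split; [exists e, D'; split; [apply (Hl _ _ E)|auto]|]. apply allF. rewrite Forall_forall in *. intros; apply Hf; auto.
    + rewrite !back_lab, (Hl _ _ E), E.
      rewrite (map_ext_F (back (e0 :: D0)) (back D0)); [reflexivity|].
      rewrite Forall_forall in *. intros; apply Hf; auto.
Qed.

Lemma good_of_lwf : forall D, lwf D -> good D.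
Proof.
  induction D as [|e0 D0 IH]; intros H.
  - intros l e D' E; discriminate.
  - inversion H; subst. rename H2 into Hn, H3 into Ht.
    assert (HD0 : good D0) by (apply IH; eapply cwf_lwf; eapply typ_cwf; eauto).
    intros l e D' E. simpl in E.
    destruct (Nat.eqb_spec (le_lab e0) l).
    + inversion E; subst. clear E.
      pose proof (typ_cwf _ _ _ _ Ht) as Hc. inversion Hc as [|? ? ? ? Hdom]; subst.
      pose proof (typ_closed _ _ _ _ Hdom HD0) as C1. rewrite length_rev in C1.
      pose proof (typ_closed _ _ _ _ Ht HD0) as C2. simpl in C2. rewrite length_rev in C2.
      destruct (lift e D' Hn (le_body e) (typ_ar _ _ _ _ Ht)).
      auto.
    + destruct (HD0 _ _ _ E) as (C1 & C2 & Hb & Heq).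
      destruct (lift e0 D0 Hn (le_body e) Hb).
      split; auto. split; auto. split; auto. congruence.
Qed.

Theorem lemma3p21 (D : lctx) (G : dctx) (M N A : dterm) :
  typ D G M A -> typ D G N A -> deq D M N ->
  ceq (back D M) (back D N).
Proof.
  intros HM HN Heq. apply main; auto.
  - apply good_of_lwf. eapply cwf_lwf. eapply typ_cwf. eauto.
  - eapply typ_ar; eauto.
  - eapply typ_ar; eauto.
Qed.
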